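(* Let $n$ be a non-negative integer and $r,s\in\mathbb{C}\setminus\mathbb{Z}^{-}$ with $s\ne0$ and $r-s\notin\mathbb{Z}^{-}$. Then \[ \sum_{k=0}^{n}(-1)^{k}\frac{\binom{n}{k}}{\binom{k+r}{s}}H_k^{(2)}=\frac{s}{r-s+1}\left(\frac{H_n^{(2)}}{\binom{n+r}{r-s+1}}-\sum_{k=1}^{n}\frac{H_n-H_{n-k}}{k\binom{n-k+r}{r-s+1}}\right). \]
   Context: $\mathbb{Z}^{-}$ denotes the set of negative integers. For integers $m\ge0$, $H_m=\sum_{j=1}^m1/j$ and $H_m^{(2)}=\sum_{j=1}^m1/j^2$. Binomial coefficients with complex entries: $\binom{x}{y}=\frac{\Gamma(x+1)}{\Gamma(y+1)\Gamma(x-y+1)}$. *)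

(* Defs.v *)
From Stdlib Require Import Reals.
From Coquelicot Require Import Coquelicot.
Open Scope C_scope.

(* m^z for a positive integer m and complex z: exp(z * ln m), written out. *)
Definition cpow_nat (m : nat) (z : C) : C :=
  RtoC (exp (Re z * ln (INR m))) *
  (cos (Im z * ln (INR m)), sin (Im z * ln (INR m))).

(* Gauss's product: m! m^z / (z (z+1) ... (z+m)) *)
Fixpoint cpoch_prod (z : C) (m : nat) : C :=
  match m with
  | O => z
  | S k => cpoch_prod z k * (z + RtoC (INR (S k)))
  end.

Definition gauss_seq (z : C) (m : nat) : C :=
  RtoC (INR (Factorial.fact m)) * cpow_nat m z / cpoch_prod z m.

(* Complex Gamma function, defined as the (componentwise) limit of Gauss's
   sequence; this limit exists for every z outside {0,-1,-2,...}. *)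
Definition CGamma (z : C) : C :=
  (real (Lim_seq (fun m => Re (gauss_seq z m))),
   real (Lim_seq (fun m => Im (gauss_seq z m)))).

Definition cbinom (x y : C) : C :=
  CGamma (x + 1) / (CGamma (y + 1) * CGamma (x - y + 1)).

Definition is_neg_int (z : C) : Prop := exists m : nat, z = RtoC (- INR (S m)).

Fixpoint H (m : nat) : R :=
  match m with O => 0%R | S k => (H k + / INR (S k))%R end.
Fixpoint H2 (m : nat) : R :=
  match m with O => 0%R | S k => (H2 k + / (INR (S k))^2)%R end.

(* Main.v *)
Require Import Defs.
From Stdlib Require Import Reals Lra Lia.
From Coquelicot Require Import Coquelicot.
Open Scope C_scope.

Open Scope C_scope.

Lemma Cinv_0 : Cinv 0 = 0.
Proof.
  unfold Cinv, Rdiv; simpl. unfold RtoC. f_equal; ring.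
Qed.

Lemma Cinv_mult_all (a b : C) : Cinv (a * b) = Cinv a * Cinv b.
Proof.
  destruct (Ceq_dec a 0) as [->|Ha].
  - rewrite Cmult_0_l, Cinv_0. ring.
  - destruct (Ceq_dec b 0) as [->|Hb].
    + rewrite Cmult_0_r, Cinv_0. ring.
    + field. split; auto.
Qed.

Lemma Cinv_inv_all (a : C) : Cinv (Cinv a) = a.
Proof.
  destruct (Ceq_dec a 0) as [->|Ha].
  - rewrite !Cinv_0. reflexivity.
  - field. Show. auto.
Qed.

Open Scope C_scope.

Definition cexpr (z : C) (t : R) : C :=
  RtoC (exp (Re z * t)) * (cos (Im z * t), sin (Im z * t)).

Lemma cexpr_plus z t1 t2 : cexpr z (t1 + t2) = cexpr z t1 * cexpr z t2.
Proof.
  unfold cexpr, Cmult, RtoC; simpl.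
  rewrite !Rmult_plus_distr_l, exp_plus, cos_plus, sin_plus. f_equal; ring.
Qed.

Definition qfac (z : C) (m : nat) : C :=
  RtoC (INR (S m)) * cexpr z (ln (INR (S m)) - ln (INR m)) * Cinv (z + RtoC (INR (S m))).

Lemma gauss_rec z m : gauss_seq z (S m) = gauss_seq z m * qfac z m.
Proof.
  unfold gauss_seq, qfac, Cdiv.
  replace (cpow_nat (S m) z) with (cpow_nat m z * cexpr z (ln (INR (S m)) - ln (INR m))).
  2:{ unfold cpow_nat. fold (cexpr z (ln (INR m))). fold (cexpr z (ln (INR (S m)))).
      rewrite <- cexpr_plus. f_equal. ring. }
  change (cpoch_prod z (S m)) with (cpoch_prod z m * (z + RtoC (INR (S m)))).
  change (Factorial.fact (S m)) with (S m * Factorial.fact m)%nat.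
  rewrite mult_INR, RtoC_mult, Cinv_mult_all. ring.
Qed.

Lemma cpoch_shift z m : z * cpoch_prod (z + 1) m = cpoch_prod z (S m).
Proof.
  induction m as [|m IH].
  - simpl. replace (RtoC (INR 1)) with (RtoC 1) by (simpl; reflexivity). ring.
  - change (cpoch_prod (z+1) (S m)) with (cpoch_prod (z+1) m * (z + 1 + RtoC (INR (S m)))).
    change (cpoch_prod z (S (S m))) with (cpoch_prod z (S m) * (z + RtoC (INR (S (S m))))).
    rewrite <- IH. rewrite (S_INR (S m)), RtoC_plus. ring.
Qed.

Lemma cpow_shift m z : (1 <= m)%nat -> cpow_nat m (z + 1) = RtoC (INR m) * cpow_nat m z.
Proof.
  intro Hm. assert (Hp : (0 < INR m)%R) by (apply lt_0_INR; lia).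
  unfold cpow_nat, Cmult, RtoC; simpl. unfold Re, Im.
  replace ((fst z + 1) * ln (INR m))%R with (fst z * ln (INR m) + ln (INR m))%R by ring.
  rewrite exp_plus, exp_ln by auto.
  replace ((snd z + 0) * ln (INR m))%R with (snd z * ln (INR m))%R by ring.
  f_equal; ring.
Qed.

Open Scope R_scope.

Lemma Rabs_le_inv x b : Rabs x <= b -> - b <= x <= b.
Proof. unfold Rabs; destruct (Rcase_abs x); intros; lra. Qed.

Lemma exp_bound2 x : Rabs x <= /2 -> 0 <= exp x - 1 - x <= 2 * x ^ 2.
Proof.
  intro Hx. apply Rabs_le_inv in Hx.
  pose proof (exp_ineq1_le x) as H1.
  pose proof (exp_ineq1_le (-x)) as H2.
  assert (He : exp x = / exp (- x)) by (rewrite exp_Ropp, Rinv_inv; reflexivity).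
  assert (Hle : exp x <= / (1 - x)).
  { rewrite He. apply Rinv_le_contravar; lra. }
  split; [lra|].
  assert (/ (1 - x) - 1 - x = x ^ 2 / (1 - x)) by (field; lra).
  assert (x ^ 2 / (1 - x) <= 2 * x ^ 2).
  { unfold Rdiv. assert (0 <= x ^ 2) by (apply pow2_ge_0).
    assert (/ (1 - x) <= 2).
    { replace 2 with (/ (/ 2)) by field. apply Rinv_le_contravar; lra. }
    nra. }
  lra.
Qed.

Lemma cos_bound2 x : Rabs x <= 1 -> Rabs (cos x - 1) <= x ^ 2 / 2.
Proof.
  intro Hx. apply Rabs_le_inv in Hx.
  pose proof (pre_cos_bound x 0 ltac:(lra) ltac:(lra)) as [H _].
  assert (E : cos_approx x (2 * 0 + 1) = 1 - x * x / 2).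
  { unfold cos_approx, cos_term. simpl. field. }
  rewrite E in H. pose proof (COS_bound x) as [_ H2].
  rewrite Rabs_left1 by lra. nra.
Qed.

Lemma sin_bound_pos x : 0 <= x <= /2 -> Rabs (sin x - x) <= x ^ 2.
Proof.
  intro Hx.
  pose proof (pre_sin_bound x 0 ltac:(lra) ltac:(lra)) as [H1 H2].
  assert (E1 : sin_approx x (2 * 0 + 1) = x - x * x * x / 6).
  { unfold sin_approx, sin_term. simpl. field. }
  assert (E2 : sin_approx x (2 * (0 + 1)) = x - x * x * x / 6 + x * x * x * x * x / 120).
  { unfold sin_approx, sin_term. simpl. field. }
  rewrite E1 in H1; rewrite E2 in H2.
  assert (0 <= x * x) by nra.
  assert (x * x * x <= x * x) by nra.
  assert (0 <= x * x * x) by nra.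
  assert (x * x * x * x * x <= x * x * x) by nra.
  apply Rabs_le. simpl. split; nra.
Qed.

Lemma sin_bound2 x : Rabs x <= /2 -> Rabs (sin x - x) <= x ^ 2.
Proof.
  intro Hx. destruct (Rle_dec 0 x) as [Hp|Hn].
  - apply sin_bound_pos. apply Rabs_le_inv in Hx. lra.
  - replace (sin x - x) with (- (sin (- x) - (- x))) by (rewrite sin_neg; ring).
    rewrite Rabs_Ropp. replace (x ^ 2) with ((- x) ^ 2) by ring.
    apply sin_bound_pos. apply Rabs_le_inv in Hx. lra.
Qed.

Lemma E_bound a b : Rabs a <= /2 -> Rabs b <= /2 ->
  Rabs (exp a * cos b - 1 - a) + Rabs (exp a * sin b - b) <= 4 * (a ^ 2 + b ^ 2).
Proof.
  intros Ha Hb.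
  pose proof (exp_bound2 a Ha) as [E1 E2].
  assert (Hb1 : Rabs b <= 1) by lra.
  pose proof (cos_bound2 b Hb1) as C1.
  pose proof (sin_bound2 b Hb) as S1.
  assert (Hea : exp a <= 2).
  { apply Rabs_le_inv in Ha. assert (a ^ 2 <= /4) by nra. lra. }
  assert (Hep : 0 < exp a) by apply exp_pos.
  assert (A1 : Rabs (exp a * cos b - 1 - a) <= 2 * a ^ 2 + b ^ 2).
  { replace (exp a * cos b - 1 - a) with ((exp a - 1 - a) + exp a * (cos b - 1)) by ring.
    eapply Rle_trans; [apply Rabs_triang|].
    rewrite Rabs_mult, (Rabs_right (exp a)) by lra.
    rewrite (Rabs_right (exp a - 1 - a)) by lra.
    assert (exp a * Rabs (cos b - 1) <= 2 * (b ^ 2 / 2)).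
    { apply Rmult_le_compat; try lra. apply Rabs_pos. }
    lra. }
  assert (A2 : Rabs (exp a * sin b - b) <= 3 * Rabs a * Rabs b + b ^ 2).
  { replace (exp a * sin b - b) with ((exp a - 1) * sin b + (sin b - b)) by ring.
    eapply Rle_trans; [apply Rabs_triang|].
    rewrite Rabs_mult.
    assert (Hx1 : Rabs (exp a - 1) <= 2 * Rabs a).
    { assert (a ^ 2 = Rabs a * Rabs a) by (rewrite <- Rabs_mult; simpl; rewrite Rmult_1_r, Rabs_right; [ring| apply Rle_ge; nra]).
      apply Rabs_le. apply Rabs_le_inv in Ha. destruct (Rle_dec 0 a).
      - rewrite Rabs_right by lra. nra.
      - rewrite Rabs_left by lra. nra. }
    assert (Hx2 : Rabs (sin b) <= 3 / 2 * Rabs b).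
    { replace (sin b) with ((sin b - b) + b) by ring.
      eapply Rle_trans; [apply Rabs_triang|].
      assert (b ^ 2 <= / 2 * Rabs b).
      { replace (b ^ 2) with (Rabs b * Rabs b).
        - apply Rmult_le_compat_r; [apply Rabs_pos| lra].
        - rewrite <- Rabs_mult. rewrite Rabs_right; [ring| apply Rle_ge; nra]. }
      lra. }
    assert (Rabs (exp a - 1) * Rabs (sin b) <= (2 * Rabs a) * (3 / 2 * Rabs b)).
    { apply Rmult_le_compat; try apply Rabs_pos; auto. }
    lra. }
  assert (3 * Rabs a * Rabs b <= 3 / 2 * (a ^ 2 + b ^ 2)).
  { assert (a ^ 2 = Rabs a * Rabs a) by (rewrite <- Rabs_mult; rewrite Rabs_right; [ring| apply Rle_ge; nra]).
    assert (b ^ 2 = Rabs b * Rabs b) by (rewrite <- Rabs_mult; rewrite Rabs_right; [ring| apply Rle_ge; nra]).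
    pose proof (pow2_ge_0 (Rabs a - Rabs b)). rewrite H, H0. nra. }
  assert (0 <= a ^ 2) by apply pow2_ge_0.
  assert (0 <= b ^ 2) by apply pow2_ge_0.
  lra.
Qed.

Lemma L_bounds m : (1 <= m)%nat ->
  0 < ln (INR (S m)) - ln (INR m) <= / INR m /\
  1 <= INR (S m) * (ln (INR (S m)) - ln (INR m)).
Proof.
  intro Hm. assert (Hp : 0 < INR m) by (apply lt_0_INR; lia).
  rewrite S_INR.
  set (L := ln (INR m + 1) - ln (INR m)).
  assert (EL : exp L = (INR m + 1) / INR m).
  { unfold L, Rminus. rewrite exp_plus, exp_Ropp, !exp_ln by lra. reflexivity. }
  assert (U : L < / INR m).
  { apply exp_lt_inv. rewrite EL.
    replace ((INR m + 1) / INR m) with (1 + / INR m) by (field; lra).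
    apply exp_ineq1. apply Rgt_not_eq, Rinv_0_lt_compat; lra. }
  assert (Lw : / (INR m + 1) < L).
  { apply Ropp_lt_cancel. apply exp_lt_inv. rewrite exp_Ropp, EL.
    replace (/ ((INR m + 1) / INR m)) with (1 + - / (INR m + 1)) by (field; lra).
    apply exp_ineq1. apply Rlt_not_eq. apply Ropp_lt_gt_0_contravar, Rinv_0_lt_compat; lra. }
  assert (0 < / (INR m + 1)) by (apply Rinv_0_lt_compat; lra).
  split; [split; lra|].
  apply Rmult_lt_compat_l with (r := INR m + 1) in Lw; [|lra].
  rewrite Rinv_r in Lw by lra. lra.
Qed.

Open Scope C_scope.

Ltac Ceq := apply injective_projections; unfold Cminus, Cmult, Cplus, Copp, RtoC; simpl; ring.

Lemma Cmod_le_sum (w : C) : (Cmod w <= Rabs (fst w) + Rabs (snd w))%R.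
Proof.
  unfold Cmod. rewrite <- (sqrt_pow2 (Rabs (fst w) + Rabs (snd w))).
  2:{ pose proof (Rabs_pos (fst w)); pose proof (Rabs_pos (snd w)); lra. }
  apply sqrt_le_1_alt.
  rewrite <- (pow2_abs (fst w)), <- (pow2_abs (snd w)).
  pose proof (Rabs_pos (fst w)); pose proof (Rabs_pos (snd w)). nra.
Qed.

Lemma Cmod_lower (z : C) (t : R) : (0 <= t)%R -> (t - Cmod z <= Cmod (z + RtoC t))%R.
Proof.
  intro Ht. pose proof (Cmod_triangle (z + RtoC t) (- z)) as H.
  replace (z + RtoC t + - z) with (RtoC t) in H by Ceq.
  rewrite Cmod_R, Rabs_right in H by lra. rewrite Cmod_opp in H. lra.
Qed.

Definition Aof (z : C) : R := (Rabs (Re z) + Rabs (Im z))%R.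

Lemma q_bound (z : C) (m : nat) : (1 <= m)%nat -> (2 * Aof z + 1 <= INR m)%R ->
  (Cmod (qfac z m - 1) <= (16 * Aof z ^ 2 + 2 * Aof z) / (INR m * INR (S m)))%R.
Proof.
  intros Hm HM.
  set (A := Aof z). assert (HA : (0 <= A)%R) by (unfold A, Aof; pose proof (Rabs_pos (Re z)); pose proof (Rabs_pos (Im z)); lra).
  assert (HM2 : (2 * A + 1 <= INR m)%R) by exact HM. clear HM.
  destruct (L_bounds m Hm) as [[L0 L1] L2].
  set (L := (ln (INR (S m)) - ln (INR m))%R) in *.
  set (t := INR (S m)) in *.
  assert (Hmp : (0 < INR m)%R) by (apply lt_0_INR; lia).
  assert (Ht : t = (INR m + 1)%R) by (unfold t; apply S_INR).
  set (E := cexpr z L).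
  set (w := E - 1 - z * RtoC L).
  set (D := z + RtoC t).
  assert (HCz : (Cmod z <= A)%R) by apply Cmod_le_sum.
  assert (HD : (t / 2 <= Cmod D)%R).
  { pose proof (Cmod_lower z t ltac:(lra)). unfold D. lra. }
  assert (HD0 : D <> 0).
  { intro H0. rewrite H0, Cmod_0 in HD. lra. }
  assert (Hq : qfac z m - 1 = (RtoC t * w + z * RtoC (t * L - 1)) * Cinv D).
  { unfold qfac. fold L t E. unfold w. fold D.
    replace (RtoC (t * L - 1)) with (RtoC t * RtoC L - 1) by Ceq.
    change (cexpr z (ln t - ln (INR m))) with E. clearbody E. unfold D in *. field. exact HD0. }
  assert (Hw : (Cmod w <= 4 * A ^ 2 / INR m ^ 2)%R).
  { eapply Rle_trans; [apply Cmod_le_sum|].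
    replace (fst w) with (exp (Re z * L) * cos (Im z * L) - 1 - Re z * L)%R
      by (unfold w, E, cexpr, Re, Im, Cminus, Cplus, Copp, Cmult, RtoC; simpl; ring).
    replace (snd w) with (exp (Re z * L) * sin (Im z * L) - Im z * L)%R
      by (unfold w, E, cexpr, Re, Im, Cminus, Cplus, Copp, Cmult, RtoC; simpl; ring).
    assert (HL : (L * INR m <= 1)%R).
    { apply Rmult_le_compat_r with (r := INR m) in L1; [|lra].
      rewrite Rinv_l in L1 by lra. exact L1. }
    assert (Ha : (Rabs (Re z) * L <= A * L)%R).
    { apply Rmult_le_compat_r; [lra|]. unfold A, Aof. pose proof (Rabs_pos (Im z)). lra. }
    assert (Hb : (Rabs (Im z) * L <= A * L)%R).
    { apply Rmult_le_compat_r; [lra|]. unfold A, Aof. pose proof (Rabs_pos (Re z)). lra. }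
    assert (HAL : (A * L <= / 2)%R).
    { assert (A * L <= A * / INR m)%R by (apply Rmult_le_compat_l; lra).
      assert (A * / INR m <= /2)%R.
      { apply Rmult_le_reg_r with (INR m); [lra|]. rewrite Rmult_assoc, Rinv_l by lra. lra. }
      lra. }
    eapply Rle_trans; [apply E_bound|].
    - rewrite Rabs_mult, (Rabs_right L) by lra. lra.
    - rewrite Rabs_mult, (Rabs_right L) by lra. lra.
    - assert (Hsq : ((Re z * L) ^ 2 + (Im z * L) ^ 2 <= (A * L) ^ 2)%R).
      { rewrite <- (pow2_abs (Re z * L)), <- (pow2_abs (Im z * L)).
        rewrite !Rabs_mult, (Rabs_right L) by lra.
        pose proof (Rabs_pos (Re z)); pose proof (Rabs_pos (Im z)).
        unfold A, Aof. 
        assert (0 <= Rabs (Re z) * Rabs (Im z) * (L * L))%R by (apply Rmult_le_pos; nra).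
        simpl. nra. }
      assert (HAL2 : ((A * L) ^ 2 <= A ^ 2 / INR m ^ 2)%R).
      { replace (A ^ 2 / INR m ^ 2)%R with ((A * / INR m) ^ 2)%R by (field; lra).
        apply pow_incr. split; [nra|]. apply Rmult_le_compat_l; lra. }
      lra. }
  rewrite Hq, Cmod_mult, Cmod_inv by auto.
  assert (HN : (Cmod (RtoC t * w + z * RtoC (t * L - 1)) <= t * (4 * A ^ 2 / INR m ^ 2) + A * / INR m)%R).
  { eapply Rle_trans; [apply Cmod_triangle|].
    rewrite !Cmod_mult, !Cmod_R, (Rabs_right t) by lra.
    rewrite Rabs_right by lra.
    apply Rplus_le_compat.
    - apply Rmult_le_compat_l; lra.
    - apply Rmult_le_compat; try lra. apply Cmod_ge_0.
      rewrite Ht in *. 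
      assert ((INR m + 1) * L <= (INR m + 1) * / INR m)%R by (apply Rmult_le_compat_l; lra).
      replace ((INR m + 1) * / INR m)%R with (1 + / INR m)%R in H by (field; lra). lra. }
  assert (HiD : (/ Cmod D <= 2 / t)%R).
  { replace (2 / t)%R with (/ (t / 2))%R by (field; lra).
    apply Rinv_le_contravar; lra. }
  eapply Rle_trans.
  { apply Rmult_le_compat; [apply Cmod_ge_0| left; apply Rinv_0_lt_compat; lra | exact HN | exact HiD]. }
  rewrite Ht. unfold Rdiv.
  assert (Hfin : (((INR m + 1) * (4 * A ^ 2 * / INR m ^ 2) + A * / INR m) * (2 * / (INR m + 1)) =
    8 * A ^ 2 / INR m ^ 2 + 2 * A / (INR m * (INR m + 1)))%R) by (field; lra).
  rewrite Hfin.
  assert (Hu : (/ INR m ^ 2 <= 2 * / (INR m * (INR m + 1)))%R).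
  { replace (/ INR m ^ 2)%R with ((INR m + 1) / INR m * / (INR m * (INR m + 1)))%R by (field; lra).
    apply Rmult_le_compat_r. { left; apply Rinv_0_lt_compat; nra. }
    apply Rmult_le_reg_r with (INR m); [lra|]. unfold Rdiv. rewrite Rmult_assoc, Rinv_l by lra.
    assert (1 <= INR m)%R by (apply (le_INR 1); lia). lra. }
  assert (HA2 : (0 <= A ^ 2)%R) by apply pow2_ge_0.
  unfold Rdiv. 
  assert (8 * A ^ 2 * / INR m ^ 2 <= 8 * A ^ 2 * (2 * / (INR m * (INR m + 1))))%R
    by (apply Rmult_le_compat_l; lra).
  lra.
Qed.

Open Scope R_scope.

Lemma nat_big (x : R) : exists N : nat, x < INR N.
Proof.
  destruct (Rle_dec 0 x) as [H|H].
  - destruct (nfloor_ex x H) as [n [_ Hn]]. exists (S n). rewrite S_INR. lra.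
  - exists 0%nat. simpl. lra.
Qed.

Lemma cauchy_tel (u : nat -> R) (M : nat) (C : R) : (1 <= M)%nat -> 0 <= C ->
  (forall m, (M <= m)%nat -> Rabs (u (S m) - u m) <= C * (/ INR m - / INR (S m))) ->
  ex_finite_lim_seq u.
Proof.
  intros HM HC Hu.
  assert (Hk : forall N k, (M <= N)%nat -> Rabs (u (N + k)%nat - u N) <= C * (/ INR N - / INR (N + k))).
  { intros N k HN. induction k as [|k IH].
    - rewrite Nat.add_0_r. unfold Rminus. rewrite Rplus_opp_r, Rabs_R0. lra.
    - replace (u (N + S k)%nat - u N) with ((u (S (N + k)) - u (N + k)%nat) + (u (N + k)%nat - u N))
        by (rewrite Nat.add_succ_r; ring).
      eapply Rle_trans; [apply Rabs_triang|].
      pose proof (Hu (N + k)%nat ltac:(lia)) as H1.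
      rewrite Nat.add_succ_r. lra. }
  assert (Hk2 : forall N n, (M <= N)%nat -> (N <= n)%nat -> Rabs (u n - u N) <= C * / INR N).
  { intros N n HN Hn. replace n with (N + (n - N))%nat by lia.
    eapply Rle_trans; [apply Hk; auto|].
    assert (0 < INR (N + (n - N))) by (apply lt_0_INR; lia).
    assert (0 < / INR (N + (n - N))) by (apply Rinv_0_lt_compat; lra).
    apply Rmult_le_compat_l; lra. }
  apply ex_lim_seq_cauchy_corr. intro eps.
  destruct (nat_big (2 * C / eps)) as [N0 HN0].
  exists (M + N0)%nat. intros n m Hn Hm.
  set (N := (M + N0)%nat) in *.
  assert (HNp : 0 < INR N) by (apply lt_0_INR; unfold N; lia).
  assert (HNN : INR N0 <= INR N) by (apply le_INR; unfold N; lia).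
  replace (u n - u m) with ((u n - u N) - (u m - u N)) by ring.
  eapply Rle_lt_trans; [apply Rabs_triang|]. rewrite Rabs_Ropp.
  pose proof (Hk2 N n ltac:(unfold N; lia) Hn).
  pose proof (Hk2 N m ltac:(unfold N; lia) Hm).
  assert (2 * C * / INR N < eps).
  { pose proof (cond_pos eps) as He.
    apply Rmult_lt_reg_r with (INR N); [lra|]. rewrite Rmult_assoc, Rinv_l by lra.
    assert (2 * C / eps < INR N) by lra.
    apply Rmult_lt_compat_r with (r := eps) in H1; [|lra].
    unfold Rdiv in H1. rewrite Rmult_assoc, Rinv_l in H1 by lra. lra. }
  lra.
Qed.

Lemma prod_conv (g q : nat -> C) (M : nat) (K : R) : (1 <= M)%nat -> 0 <= K ->
  (forall m, g (S m) = (g m * q m)%C) ->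
  (forall m, (M <= m)%nat -> Cmod (q m - 1) <= K / (INR m * INR (S m))) ->
  ex_finite_lim_seq (fun m => fst (g m)) /\ ex_finite_lim_seq (fun m => snd (g m)).
Proof.
  intros HM HK Hg Hq.
  assert (Htel : forall m, (1 <= m)%nat -> K / (INR m * INR (S m)) = K * (/ INR m - / INR (S m))).
  { intros m Hm. assert (0 < INR m) by (apply lt_0_INR; lia). rewrite S_INR. field. lra. }
  assert (Hb : forall k, Cmod (g (M + k)%nat) * exp (K / INR (M + k)) <= Cmod (g M) * exp (K / INR M)).
  { induction k as [|k IH].
    - rewrite Nat.add_0_r. lra.
    - rewrite Nat.add_succ_r, Hg, Cmod_mult.
      set (m := (M + k)%nat) in *.
      assert (Hm1 : (1 <= m)%nat) by (unfold m; lia).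
      assert (Hmp : 0 < INR m) by (apply lt_0_INR; lia).
      assert (Hq1 : Cmod (q m) <= 1 + K * (/ INR m - / INR (S m))).
      { rewrite <- Htel by auto. replace (q m) with ((q m - 1) + 1)%C by ring.
        eapply Rle_trans; [apply Cmod_triangle|]. rewrite Cmod_1.
        pose proof (Hq m ltac:(unfold m; lia)). lra. }
      assert (Hq2 : Cmod (q m) <= exp (K / INR m - K / INR (S m))).
      { eapply Rle_trans; [exact Hq1|]. 
        replace (K * (/ INR m - / INR (S m))) with (K / INR m - K / INR (S m)) by (unfold Rdiv; ring).
        apply exp_ineq1_le. }
      eapply Rle_trans; [|exact IH].
      rewrite Rmult_assoc.
      apply Rmult_le_compat_l; [apply Cmod_ge_0|].
      replace (exp (K / INR m)) with (exp (K / INR m - K / INR (S m)) * exp (K / INR (S m)))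
        by (rewrite <- exp_plus; f_equal; ring).
      apply Rmult_le_compat_r; [left; apply exp_pos| exact Hq2]. }
  set (B := Cmod (g M) * exp (K / INR M)).
  assert (HB : forall m, (M <= m)%nat -> Cmod (g m) <= B).
  { intros m Hm. replace m with (M + (m - M))%nat by lia.
    eapply Rle_trans; [|apply Hb].
    rewrite <- (Rmult_1_r (Cmod _)) at 1.
    apply Rmult_le_compat_l; [apply Cmod_ge_0|].
    match goal with |- 1 <= exp ?x => pose proof (exp_ineq1_le x); assert (0 <= x) end.
    { apply Rmult_le_pos; auto. left; apply Rinv_0_lt_compat, lt_0_INR; lia. }
    lra. }
  assert (HB0 : 0 <= B) by (unfold B; apply Rmult_le_pos; [apply Cmod_ge_0| left; apply exp_pos]).
  assert (Hd : forall m, (M <= m)%nat -> Cmod (g (S m) - g m)%C <= (B * K) * (/ INR m - / INR (S m))).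
  { intros m Hm. rewrite Hg.
    replace (g m * q m - g m)%C with (g m * (q m - 1))%C by ring.
    rewrite Cmod_mult. rewrite Rmult_assoc, <- Htel by lia.
    apply Rmult_le_compat; try apply Cmod_ge_0; auto. }
  split.
  - apply (cauchy_tel _ M (B * K)); auto. { apply Rmult_le_pos; auto. }
    intros m Hm. eapply Rle_trans; [|apply Hd; auto].
    eapply Rle_trans; [|apply Rmax_Cmod]. simpl. apply Rmax_l.
  - apply (cauchy_tel _ M (B * K)); auto. { apply Rmult_le_pos; auto. }
    intros m Hm. eapply Rle_trans; [|apply Hd; auto].
    eapply Rle_trans; [|apply Rmax_Cmod]. simpl. apply Rmax_r.
Qed.

Open Scope C_scope.

Lemma gauss_conv (z : C) : ex_finite_lim_seq (fun m => fst (gauss_seq z m)) /\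
                     ex_finite_lim_seq (fun m => snd (gauss_seq z m)).
Proof.
  destruct (nat_big (2 * Aof z + 1)) as [N HN].
  assert (HA : (0 <= Aof z)%R) by (unfold Aof; pose proof (Rabs_pos (Re z)); pose proof (Rabs_pos (Im z)); lra).
  apply (prod_conv _ (qfac z) (S N) (16 * Aof z ^ 2 + 2 * Aof z)).
  - lia.
  - pose proof (pow2_ge_0 (Aof z)). lra.
  - intro m. apply gauss_rec.
  - intros m Hm. apply q_bound. lia.
    assert (INR N <= INR m)%R by (apply le_INR; lia). lra.
Qed.

Lemma lim_real (u : nat -> R) : ex_finite_lim_seq u -> is_lim_seq u (real (Lim_seq u)).
Proof.
  intros [l Hl]. rewrite (is_lim_seq_unique _ _ Hl). exact Hl.
Qed.

Lemma CGamma_lim (z : C) : is_lim_seq (fun m => fst (gauss_seq z m)) (fst (CGamma z)) /\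
                     is_lim_seq (fun m => snd (gauss_seq z m)) (snd (CGamma z)).
Proof.
  destruct (gauss_conv z) as [H1 H2]. split; apply lim_real; auto.
Qed.

Lemma inv_n_lim : is_lim_seq (fun n => / INR n)%R 0%R.
Proof.
  pose proof (is_lim_seq_inv INR p_infty is_lim_seq_INR ltac:(discriminate)) as H.
  exact H.
Qed.

Lemma gauss_shift_id (z : C) (m : nat) : z <> 0 -> (1 <= m)%nat -> z + RtoC (INR (S m)) <> 0 ->
  z * gauss_seq z m = gauss_seq (z + 1) m + gauss_seq (z + 1) m * (z + 1) * RtoC (/ INR m).
Proof.
  intros Hz Hm HD.
  assert (Hmp : (0 < INR m)%R) by (apply lt_0_INR; lia).
  unfold gauss_seq, Cdiv. rewrite cpow_shift by auto.
  pose proof (cpoch_shift z m) as Hs.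
  change (cpoch_prod z (S m)) with (cpoch_prod z m * (z + RtoC (INR (S m)))) in Hs.
  set (P := cpoch_prod z m) in *. set (P' := cpoch_prod (z + 1) m) in *.
  assert (HP : P = z * P' * Cinv (z + RtoC (INR (S m)))).
  { rewrite Hs. field. auto. }
  rewrite HP, !Cinv_mult_all, Cinv_inv_all.
  set (iP := Cinv P').
  rewrite S_INR, RtoC_plus. rewrite RtoC_inv by lra.
  field. split; auto. intro H0. apply RtoC_inj in H0. lra.
Qed.

Lemma fst_id (z x y : C) (c : R) : z * x = y + y * (z + 1) * RtoC c ->
  (fst z * fst x - snd z * snd x = fst y + (fst y * (fst z + 1) - snd y * snd z) * c)%R.
Proof.
  intro H. transitivity (fst (z * x)); [simpl; ring|]. rewrite H. simpl; ring.
Qed.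

Lemma snd_id (z x y : C) (c : R) : z * x = y + y * (z + 1) * RtoC c ->
  (fst z * snd x + snd z * fst x = snd y + (fst y * snd z + snd y * (fst z + 1)) * c)%R.
Proof.
  intro H. transitivity (snd (z * x)); [simpl; ring|]. rewrite H. simpl; ring.
Qed.

Lemma Gamma_succ (z : C) : z <> 0 -> CGamma (z + 1) = z * CGamma z.
Proof.
  intro Hz.
  destruct (CGamma_lim z) as [Lr Li].
  destruct (CGamma_lim (z + 1)) as [Lr' Li'].
  destruct (nat_big (Cmod z)) as [N HN].
  assert (Hev : forall m, (S N <= m)%nat ->
     z * gauss_seq z m = gauss_seq (z + 1) m + gauss_seq (z + 1) m * (z + 1) * RtoC (/ INR m)).
  { intros m Hm. apply gauss_shift_id; auto. lia.
    intro H0. pose proof (Cmod_lower z (INR (S m)) (pos_INR _)) as H1.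
    rewrite H0, Cmod_0 in H1. assert (INR N <= INR (S m))%R by (apply le_INR; lia). lra. }
  set (g := gauss_seq z) in *. set (g' := gauss_seq (z + 1)) in *.
  pose proof inv_n_lim as Hinv.
  assert (E1 : (fst z * fst (CGamma z) - snd z * snd (CGamma z) = fst (CGamma (z + 1)))%R).
  { assert (A : is_lim_seq (fun m => fst z * fst (g m) - snd z * snd (g m))%R
                  (fst z * fst (CGamma z) - snd z * snd (CGamma z))%R).
    { apply is_lim_seq_minus'; apply is_lim_seq_mult'; auto; apply is_lim_seq_const. }
    assert (B : is_lim_seq (fun m => fst (g' m) + (fst (g' m) * (fst z + 1) - snd (g' m) * snd z) * / INR m)%R
                  (fst (CGamma (z + 1)) + (fst (CGamma (z + 1)) * (fst z + 1) - snd (CGamma (z + 1)) * snd z) * 0)%R).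
    { apply is_lim_seq_plus'; auto. apply is_lim_seq_mult'; auto.
      apply is_lim_seq_minus'; apply is_lim_seq_mult'; auto; apply is_lim_seq_const. }
    assert (A' : is_lim_seq (fun m => fst (g' m) + (fst (g' m) * (fst z + 1) - snd (g' m) * snd z) * / INR m)%R
                  (fst z * fst (CGamma z) - snd z * snd (CGamma z))%R).
    { eapply is_lim_seq_ext_loc; [|exact A]. exists (S N). intros m Hm.
      apply fst_id. apply Hev; auto. }
    pose proof (is_lim_seq_unique _ _ A') as U1. pose proof (is_lim_seq_unique _ _ B) as U2.
    rewrite U1 in U2. apply Rbar_finite_eq in U2. rewrite Rmult_0_r, Rplus_0_r in U2. exact U2. }
  assert (E2 : (fst z * snd (CGamma z) + snd z * fst (CGamma z) = snd (CGamma (z + 1)))%R).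
  { assert (A : is_lim_seq (fun m => fst z * snd (g m) + snd z * fst (g m))%R
                  (fst z * snd (CGamma z) + snd z * fst (CGamma z))%R).
    { apply is_lim_seq_plus'; apply is_lim_seq_mult'; auto; apply is_lim_seq_const. }
    assert (B : is_lim_seq (fun m => snd (g' m) + (fst (g' m) * snd z + snd (g' m) * (fst z + 1)) * / INR m)%R
                  (snd (CGamma (z + 1)) + (fst (CGamma (z + 1)) * snd z + snd (CGamma (z + 1)) * (fst z + 1)) * 0)%R).
    { apply is_lim_seq_plus'; auto. apply is_lim_seq_mult'; auto.
      apply is_lim_seq_plus'; apply is_lim_seq_mult'; auto; apply is_lim_seq_const. }
    assert (A' : is_lim_seq (fun m => snd (g' m) + (fst (g' m) * snd z + snd (g' m) * (fst z + 1)) * / INR m)%R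
                  (fst z * snd (CGamma z) + snd z * fst (CGamma z))%R).
    { eapply is_lim_seq_ext_loc; [|exact A]. exists (S N). intros m Hm.
      apply snd_id. apply Hev; auto. }
    pose proof (is_lim_seq_unique _ _ A') as U1. pose proof (is_lim_seq_unique _ _ B) as U2.
    rewrite U1 in U2. apply Rbar_finite_eq in U2. rewrite Rmult_0_r, Rplus_0_r in U2. exact U2. }
  rewrite (surjective_pairing (CGamma (z + 1))).
  rewrite <- E1, <- E2. clear. generalize (CGamma z). intro G.
  apply injective_projections; simpl; ring.
Qed.

Open Scope R_scope.

Fixpoint Cb (n k : nat) : R :=
  match n, k with
  | O, O => 1
  | O, S _ => 0
  | S _, O => 1
  | S n', S k' => Cb n' k' + Cb n' (S k')
  end.

Lemma Cb_n0 n : Cb n 0 = 1.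
Proof. destruct n; reflexivity. Qed.

Lemma Cb_zero n k : (n < k)%nat -> Cb n k = 0.
Proof.
  revert k. induction n as [|n IH]; intros k Hk.
  - destruct k; [lia|reflexivity].
  - destruct k; [lia|]. simpl. rewrite !IH by lia. ring.
Qed.

Lemma C_n0 n : Binomial.C n 0 = 1.
Proof. unfold Binomial.C. rewrite Nat.sub_0_r. simpl. field. apply INR_fact_neq_0. Qed.

Lemma C_nn n : Binomial.C n n = 1.
Proof. unfold Binomial.C. rewrite Nat.sub_diag. simpl. field. apply INR_fact_neq_0. Qed.

Lemma Cb_C n k : (k <= n)%nat -> Cb n k = Binomial.C n k.
Proof.
  revert k. induction n as [|n IH]; intros k Hk.
  - destruct k; [|lia]. simpl. rewrite C_n0. reflexivity.
  - destruct k.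
    + rewrite Cb_n0, C_n0. reflexivity.
    + simpl. destruct (Nat.eq_dec k n) as [->|Hne].
      * rewrite (Cb_zero n (S n)) by lia. rewrite IH by lia. rewrite !C_nn. ring.
      * rewrite !IH by lia. apply pascal. lia.
Qed.

Lemma Cb_absorb n j : INR (S j) * Cb (S n) (S j) = INR (S n) * Cb n j.
Proof.
  revert j. induction n as [|n IH]; intro j.
  - destruct j; simpl; ring.
  - destruct j.
    + assert (Cb (S n) 1 = INR (S n)).
      { clear IH. induction n as [|n IH]; [simpl; ring|].
        change (Cb (S (S n)) 1) with (Cb (S n) 0 + Cb (S n) 1). rewrite IH, Cb_n0, (S_INR (S n)). ring. }
      change (Cb (S (S n)) 1) with (Cb (S n) 0 + Cb (S n) 1).
      rewrite H, Cb_n0, (S_INR (S n)). simpl. ring.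
    + change (Cb (S (S n)) (S (S j))) with (Cb (S n) (S j) + Cb (S n) (S (S j))).
      rewrite Rmult_plus_distr_l, IH.
      rewrite (S_INR (S j)), Rmult_plus_distr_r, IH.
      change (Cb (S n) (S j)) with (Cb n j + Cb n (S j)).
      rewrite (S_INR (S n)). ring.
Qed.

Lemma Cb_next n j : INR (S j) * Cb n (S j) = (INR n - INR j) * Cb n j.
Proof.
  pose proof (Cb_absorb n j) as H.
  change (Cb (S n) (S j)) with (Cb n j + Cb n (S j)) in H.
  rewrite !S_INR in *. lra.
Qed.

Fixpoint smR (f : nat -> R) (n : nat) : R :=
  match n with O => 0 | S n' => smR f n' + f n' end.

Lemma smR_ext f g n : (forall i, (i < n)%nat -> f i = g i) -> smR f n = smR g n.
Proof. induction n; intros H; simpl; [reflexivity|]. rewrite IHn by (intros; apply H; lia). rewrite H by lia. reflexivity. Qed.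

Lemma smR_plus f g n : smR (fun i => f i + g i) n = smR f n + smR g n.
Proof. induction n; simpl; [ring|]. rewrite IHn. ring. Qed.

Lemma smR_scal c f n : smR (fun i => c * f i) n = c * smR f n.
Proof. induction n; simpl; [ring|]. rewrite IHn. ring. Qed.

Lemma smR_minus f g n : smR (fun i => f i - g i) n = smR f n - smR g n.
Proof. induction n; simpl; [ring|]. rewrite IHn. ring. Qed.

Lemma smR_shift f n : smR f (S n) = f 0%nat + smR (fun i => f (S i)) n.
Proof. induction n; simpl in *; [ring|]. rewrite IHn. ring. Qed.

Lemma H_sum n : smR (fun m => / INR (S m)) n = H n.
Proof. induction n; cbn [smR H]; [reflexivity|]. rewrite IHn. reflexivity. Qed.

Lemma hockey n j : smR (fun m => Cb m j) n = Cb n (S j).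
Proof.
  induction n; cbn [smR]; [reflexivity|]. rewrite IHn. simpl (Cb (S n) (S j)). ring.
Qed.

Definition Sf (n j : nat) : R := smR (fun m => (H n - H m) / INR (n - m) * Cb m j) n.

Lemma Sshift (c : nat -> R) n :
  smR (fun m => (H (S n) - H m) / INR (S n - m) * c m) (S n) =
  H (S n) / INR (S n) * c 0%nat + smR (fun m => (H n - H m) / INR (n - m) * c (S m)) n
  - / INR (S n) * smR (fun m => c (S m) / INR (S m)) n.
Proof.
  rewrite smR_shift.
  assert (E : smR (fun m => (H (S n) - H (S m)) / INR (S n - S m) * c (S m)) n =
     smR (fun m => (H n - H m) / INR (n - m) * c (S m)) n - / INR (S n) * smR (fun m => c (S m) / INR (S m)) n).
  { rewrite <- smR_scal, <- smR_minus. apply smR_ext. intros m Hm.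
    replace (S n - S m)%nat with (n - m)%nat by lia.
    assert (Hnm : INR (n - m) <> 0) by (apply not_0_INR; lia).
    rewrite minus_INR in * by lia.
    change (H (S n)) with (H n + / INR (S n)). change (H (S m)) with (H m + / INR (S m)).
    assert (INR (S n) <> 0) by (apply not_0_INR; lia).
    assert (INR (S m) <> 0) by (apply not_0_INR; lia).
    rewrite !S_INR in *. field. repeat split; auto. }
  rewrite E. simpl (H 0). rewrite Nat.sub_0_r. unfold Rdiv. ring.
Qed.

Lemma F_id n j : Sf n j = Cb n j * (H2 n - H2 j).
Proof.
  revert j. induction n as [|n IH]; intro j.
  - unfold Sf. simpl. destruct j; simpl; ring.
  - destruct j.
    + unfold Sf. rewrite Sshift.
      rewrite (smR_ext _ (fun m => (H n - H m) / INR (n - m) * Cb m 0)) by (intros; rewrite !Cb_n0; reflexivity).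
      fold (Sf n 0). rewrite IH.
      rewrite (smR_ext _ (fun m => / INR (S m))) by (intros; rewrite Cb_n0; unfold Rdiv; ring).
      rewrite H_sum, !Cb_n0.
      change (H2 (S n)) with (H2 n + / INR (S n) ^ 2).
      change (H (S n)) with (H n + / INR (S n)).
      simpl H2. assert (INR (S n) <> 0) by (apply not_0_INR; lia). field. auto.
    + unfold Sf. rewrite Sshift. simpl (Cb 0 (S j)).
      rewrite (smR_ext (fun m => (H n - H m) / INR (n - m) * Cb (S m) (S j))
                       (fun m => (H n - H m) / INR (n - m) * Cb m j + (H n - H m) / INR (n - m) * Cb m (S j)))
        by (intros; simpl; ring).
      rewrite smR_plus. fold (Sf n j). fold (Sf n (S j)). rewrite !IH.
      rewrite (smR_ext (fun m => Cb (S m) (S j) / INR (S m)) (fun m => / INR (S j) * Cb m j)).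
      2:{ intros m _. pose proof (Cb_absorb m j).
          assert (INR (S m) <> 0) by (apply not_0_INR; lia).
          assert (INR (S j) <> 0) by (apply not_0_INR; lia).
          assert (E : Cb (S m) (S j) = INR (S m) * Cb m j / INR (S j)) by (rewrite <- H; field; auto).
          rewrite E. field. split; auto. }
      rewrite smR_scal, hockey.
      pose proof (Cb_next n j) as Hn.
      assert (INR (S n) <> 0) by (apply not_0_INR; lia).
      assert (INR (S j) <> 0) by (apply not_0_INR; lia).
      assert (E : Cb n (S j) = (INR n - INR j) * Cb n j / INR (S j)) by (rewrite <- Hn; field; auto).
      change (Cb (S n) (S j)) with (Cb n j + Cb n (S j)).
      rewrite E.
      change (H2 (S n)) with (H2 n + / INR (S n) ^ 2).
      change (H2 (S j)) with (H2 j + / INR (S j) ^ 2).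
      rewrite !S_INR in *. field. split; auto.
Qed.

Open Scope C_scope.

Fixpoint smC (f : nat -> C) (n : nat) : C :=
  match n with O => 0 | S n' => smC f n' + f n' end.

Lemma smC_ext (f g : nat -> C) n : (forall i, (i < n)%nat -> f i = g i) -> smC f n = smC g n.
Proof. induction n; intros H; simpl; [reflexivity|]. rewrite IHn by (intros; apply H; lia). rewrite H by lia. reflexivity. Qed.

Lemma smC_plus (f g : nat -> C) n : smC (fun i => f i + g i) n = smC f n + smC g n.
Proof. induction n; simpl; [ring|]. rewrite IHn. ring. Qed.

Lemma smC_minus (f g : nat -> C) n : smC (fun i => f i - g i) n = smC f n - smC g n.
Proof. induction n; simpl; [ring|]. rewrite IHn. ring. Qed.

Lemma smC_scal (c : C) (f : nat -> C) n : smC (fun i => c * f i) n = c * smC f n.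
Proof. induction n; simpl; [ring|]. rewrite IHn. ring. Qed.

Lemma smC_shift (f : nat -> C) n : smC f (S n) = f 0%nat + smC (fun i => f (S i)) n.
Proof. induction n; simpl in *; [ring|]. rewrite IHn. ring. Qed.

Lemma smC_RtoC (f : nat -> R) n : RtoC (smR f n) = smC (fun i => RtoC (f i)) n.
Proof. induction n; simpl; [reflexivity|]. rewrite RtoC_plus, IHn. reflexivity. Qed.

Lemma smC_extend (f : nat -> C) p q : (forall i, (p <= i)%nat -> f i = 0) -> smC f (p + q) = smC f p.
Proof.
  intro H. induction q; [rewrite Nat.add_0_r; reflexivity|].
  rewrite Nat.add_succ_r. simpl. rewrite IHq, H by lia. ring.
Qed.

Lemma smC_swap (f : nat -> nat -> C) p q :
  smC (fun i => smC (fun j => f i j) q) p = smC (fun j => smC (fun i => f i j) p) q.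
Proof.
  induction p; simpl.
  - clear. induction q; simpl; [reflexivity|]. rewrite <- IHq. ring.
  - rewrite IHp, <- smC_plus. reflexivity.
Qed.

Lemma smC_rev (g : nat -> C) n : smC g n = smC (fun m => g (n - S m)%nat) n.
Proof.
  induction n; [reflexivity|].
  transitivity (smC g n + g n); [reflexivity|].
  rewrite (smC_shift (fun m => g (S n - S m)%nat)). rewrite IHn.
  replace (S n - 1)%nat with n by lia. rewrite Cplus_comm. reflexivity.
Qed.

Lemma sum_n_smC (f : nat -> C) n : sum_n f n = smC f (S n).
Proof.
  induction n.
  - rewrite sum_O. simpl. ring.
  - rewrite sum_Sn, IHn. reflexivity.
Qed.

Lemma sum_n_m_smC (f : nat -> C) n : sum_n_m f 1 n = smC (fun k => f (S k)) n.
Proof.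
  induction n.
  - rewrite sum_n_m_zero by lia. reflexivity.
  - rewrite sum_n_Sm by lia. rewrite IHn. reflexivity.
Qed.

Open Scope C_scope.

Definition Tb (b : nat -> C) (m : nat) : C :=
  smC (fun i => RtoC ((-1) ^ i * Cb m i)%R * b i) (S m).

Lemma Tb_ext b m p : (m <= p)%nat -> Tb b m = smC (fun i => RtoC ((-1) ^ i * Cb m i)%R * b i) (S p).
Proof.
  intro H. unfold Tb. replace (S p) with (S m + (p - m))%nat by lia.
  symmetry. apply smC_extend. intros i Hi. rewrite Cb_zero by lia.
  rewrite Rmult_0_r. ring.
Qed.

Lemma GL (b : nat -> C) (n : nat) :
  smC (fun k => RtoC ((-1) ^ k * Cb n k * H2 k)%R * b k) (S n) =
  RtoC (H2 n) * Tb b n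
  - smC (fun k => RtoC ((H n - H (n - S k)) / INR (S k))%R * Tb b (n - S k)) n.
Proof.
  set (G := fun m => RtoC ((H n - H m) / INR (n - m))%R * Tb b m).
  rewrite (smC_ext (fun k => RtoC ((H n - H (n - S k)) / INR (S k))%R * Tb b (n - S k)) (fun k => G (n - S k)%nat)).
  2:{ intros k Hk. unfold G. replace (n - (n - S k))%nat with (S k) by lia. reflexivity. }
  rewrite <- smC_rev.
  unfold G.
  rewrite (smC_ext (fun m => RtoC ((H n - H m) / INR (n - m))%R * Tb b m) (fun m => smC (fun i => RtoC ((H n - H m) / INR (n - m))%R *
                                  (RtoC ((-1) ^ i * Cb m i)%R * b i)) (S n))).
  2:{ intros m Hm. rewrite (Tb_ext b m n) by lia. rewrite smC_scal. reflexivity. }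
  rewrite smC_swap.
  rewrite (smC_ext (fun i => smC (fun m => RtoC ((H n - H m) / INR (n - m))%R *
                                  (RtoC ((-1) ^ i * Cb m i)%R * b i)) n)
     (fun i => RtoC (Cb n i * (H2 n - H2 i))%R * (RtoC ((-1) ^ i)%R * b i))).
  2:{ intros i Hi. rewrite <- F_id. unfold Sf. rewrite smC_RtoC.
      rewrite Cmult_comm, <- (smC_scal (RtoC ((-1) ^ i)%R * b i)).
      apply smC_ext. intros m Hm. rewrite !RtoC_mult. ring. }
  unfold Tb. rewrite <- smC_scal, <- smC_minus.
  apply smC_ext. intros i Hi.
  rewrite !RtoC_mult, RtoC_minus. ring.
Qed.

Lemma Tb_pascal (b : nat -> C) n : Tb b (S n) = Tb b n - Tb (fun i => b (S i)) n.
Proof.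
  rewrite (Tb_ext b n (S n)) by lia.
  unfold Tb.
  rewrite smC_shift. rewrite (smC_shift (fun i => RtoC ((-1) ^ i * Cb n i)%R * b i)).
  rewrite (smC_ext (fun i => RtoC ((-1) ^ S i * Cb (S n) (S i))%R * b (S i))
     (fun i => RtoC ((-1) ^ S i * Cb n (S i))%R * b (S i) - RtoC ((-1) ^ i * Cb n i)%R * b (S i))).
  2:{ intros i Hi.
      assert (E : ((-1) ^ S i * Cb (S n) (S i) = (-1) ^ S i * Cb n (S i) - (-1) ^ i * Cb n i)%R)
        by (simpl; ring).
      rewrite E, RtoC_minus. ring. }
  rewrite smC_minus. rewrite !Cb_n0. simpl pow. ring.
Qed.

Open Scope C_scope.


Lemma Gamma_rec (z w : C) : z <> 0 -> w = z + 1 -> CGamma w = z * CGamma z.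
Proof. intros Hz ->. apply Gamma_succ; auto. Qed.

Lemma Cinv_cbinom (x y : C) :
  Cinv (cbinom x y) = Cinv (CGamma (x + 1)) * (CGamma (y + 1) * CGamma (x - y + 1)).
Proof. unfold cbinom, Cdiv. rewrite Cinv_mult_all, Cinv_inv_all. reflexivity. Qed.

Lemma not_neg (z : C) : ~ is_neg_int z -> forall j, z + RtoC (INR (S j)) <> 0.
Proof.
  intros Hz j H. apply Hz. exists j. rewrite RtoC_opp.
  replace z with (z + RtoC (INR (S j)) - RtoC (INR (S j))) by ring. rewrite H. ring.
Qed.

Definition bk (r s : C) (k : nat) : C := Cinv (cbinom (RtoC (INR k) + r) s).
Definition cbk (r s : C) (m : nat) : C := cbinom (RtoC (INR m) + r) (r - s + 1).

Lemma Tb_fext f g m : (forall i, f i = g i) -> Tb f m = Tb g m.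
Proof. intro H. unfold Tb. apply smC_ext. intros. rewrite H. reflexivity. Qed.

Lemma base_id (s : C) (hs0 : s <> 0) (hs : forall j, s + RtoC (INR (S j)) <> 0) (n : nat) :
  forall r : C, (forall j, r + RtoC (INR (S j)) <> 0) -> (forall j, r - s + RtoC (INR (S j)) <> 0) ->
  Tb (bk r s) n = s / (r - s + 1) * Cinv (cbk r s n).
Proof.
  assert (hsn : forall n, s + RtoC (INR n) <> 0).
  { intros [|j]; [simpl; rewrite Cplus_0_r; auto| apply hs]. }
  induction n as [|n IH]; intros r Hr Hrs.
  - unfold Tb. simpl smC. unfold bk, cbk. rewrite !Cinv_cbinom.
    pose proof (Hrs 0%nat) as H1. simpl INR in H1.
    replace (CGamma (RtoC (INR 0) + r + 1)) with (CGamma (r + 1)) by (f_equal; Ceq).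
    replace (CGamma (RtoC (INR 0) + r - s + 1)) with (CGamma (r - s + 1)) by (f_equal; Ceq).
    replace (CGamma (RtoC (INR 0) + r - (r - s + 1) + 1)) with (CGamma s) by (f_equal; Ceq).
    rewrite (Gamma_rec s (s + 1)) by auto.
    rewrite (Gamma_rec (r - s + 1) (r - s + 1 + 1)) by auto.
    simpl Cb. replace (RtoC ((-1) ^ 0 * 1)%R) with (RtoC 1) by (f_equal; simpl; ring).
    rewrite Rmult_1_r. change (RtoC 1) with (1 : C). set (Q := Cinv (CGamma (r + 1))). field. auto.
  - rewrite Tb_pascal.
    rewrite (Tb_fext (fun i => bk r s (S i)) (bk (r + 1) s)).
    2:{ intro i. unfold bk. f_equal. f_equal. rewrite S_INR, RtoC_plus. ring. }
    rewrite IH by auto.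
    assert (Hr1 : forall j, r + 1 + RtoC (INR (S j)) <> 0).
    { intro j. replace (r + 1 + RtoC (INR (S j))) with (r + RtoC (INR (S (S j)))). apply Hr.
      rewrite (S_INR (S j)), RtoC_plus. ring. }
    assert (Hrs1 : forall j, r + 1 - s + RtoC (INR (S j)) <> 0).
    { intro j. replace (r + 1 - s + RtoC (INR (S j))) with (r - s + RtoC (INR (S (S j)))). apply Hrs.
      rewrite (S_INR (S j)), RtoC_plus. ring. }
    rewrite IH by auto.
    unfold cbk. rewrite !Cinv_cbinom.
    pose proof (Hrs 0%nat) as H1. simpl INR in H1.
    assert (H2 : r - s + 1 + 1 <> 0).
    { pose proof (Hrs 1%nat) as H2. replace (RtoC (INR 2)) with (1 + 1) in H2 by Ceq.
      intro HH; apply H2; rewrite <- HH; ring. }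
    assert (H3 : RtoC (INR n) + r + 1 <> 0).
    { pose proof (Hr n) as H3. rewrite S_INR, RtoC_plus in H3.
      intro HH; apply H3; rewrite <- HH; ring. }
    pose proof (hsn n) as H4.
    set (N := RtoC (INR n)) in *.
    replace (CGamma (RtoC (INR (S n)) + r + 1)) with (CGamma (N + r + 1 + 1))
      by (f_equal; rewrite S_INR, RtoC_plus; unfold N; ring).
    replace (CGamma (N + (r + 1) + 1)) with (CGamma (N + r + 1 + 1)) by (f_equal; ring).
    replace (CGamma (RtoC (INR (S n)) + r - (r - s + 1) + 1)) with (CGamma (s + N + 1))
      by (f_equal; rewrite S_INR, RtoC_plus; unfold N; ring).
    replace (CGamma (N + r - (r - s + 1) + 1)) with (CGamma (s + N)) by (f_equal; ring).
    replace (CGamma (N + (r + 1) - (r + 1 - s + 1) + 1)) with (CGamma (s + N)) by (f_equal; ring).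
    replace (CGamma (r + 1 - s + 1 + 1)) with (CGamma (r - s + 1 + 1 + 1)) by (f_equal; ring).
    rewrite (Gamma_rec (N + r + 1) (N + r + 1 + 1)) by auto.
    rewrite (Gamma_rec (s + N) (s + N + 1)) by auto.
    rewrite (Gamma_rec (r - s + 1 + 1) (r - s + 1 + 1 + 1)) by auto.
    rewrite (Gamma_rec (r - s + 1) (r - s + 1 + 1)) by auto.
    rewrite Cinv_mult_all.
    set (Q := Cinv (CGamma (N + r + 1))).
    replace (r + 1 - s + 1) with (r - s + 1 + 1) by ring.
    field. repeat split; auto.
Qed.

Open Scope C_scope.

Theorem theorem18 (n : nat) (r s : C)
  (hr : ~ is_neg_int r) (hs : ~ is_neg_int s) (hs0 : s <> 0)
  (hrs : ~ is_neg_int (r - s)) :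
  sum_n (fun k => RtoC ((-1) ^ k)%R * RtoC (Binomial.C n k)
                   / cbinom (RtoC (INR k) + r) s * RtoC (H2 k)) n
  = s / (r - s + 1) *
    (RtoC (H2 n) / cbinom (RtoC (INR n) + r) (r - s + 1)
     - sum_n_m (fun k => RtoC (H n - H (n - k))%R
                 / (RtoC (INR k) * cbinom (RtoC (INR (n - k)) + r) (r - s + 1)))
               1 n).
Proof.
  pose proof (not_neg r hr) as Hr.
  pose proof (not_neg s hs) as Hs.
  pose proof (not_neg (r - s) hrs) as Hrs.
  assert (HT : forall m, Tb (bk r s) m = s / (r - s + 1) * Cinv (cbk r s m)).
  { intro m. apply base_id; auto. }
  rewrite sum_n_smC, sum_n_m_smC.
  rewrite (smC_ext _ (fun k => RtoC ((-1) ^ k * Cb n k * H2 k)%R * bk r s k)).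
  2:{ intros k Hk. rewrite Cb_C by lia. unfold bk, Cdiv. rewrite !RtoC_mult. ring. }
  rewrite GL. rewrite HT.
  rewrite (smC_ext (fun k => RtoC ((H n - H (n - S k)) / INR (S k))%R * Tb (bk r s) (n - S k))
     (fun k => s / (r - s + 1) * (RtoC (H n - H (n - S k))%R /
                 (RtoC (INR (S k)) * cbinom (RtoC (INR (n - S k)) + r) (r - s + 1))))).
  2:{ intros k Hk. rewrite HT. unfold cbk. assert (INR (S k) <> 0%R) by (apply not_0_INR; lia).
      rewrite RtoC_div by auto. unfold Cdiv. rewrite Cinv_mult_all. ring. }
  rewrite smC_scal. unfold cbk, Cdiv.
  match goal with |- ?a = ?b => change (@eq C a b) end. ring.
Qed.
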